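(* Let $m\ge1$, $k\ge 1$, and let $p_1,\dots,p_m$ be probabilities summing to $1$; for a word $S$ on $[m]$ let $E(S)$ be the expected number of independent rolls of a die showing face $j$ with probability $p_j$ until $S$ first appears as a block of consecutive outcomes. (i) Suppose all $p_j>0$, and let $p=\min\{p_1,\dots,p_m\}=p_i$. Then \[ \max\{E(S): S\in[m]^k\} = p^{-1}+p^{-2}+\cdots+p^{-k} = \frac{1-p^k}{(1-p)p^k}, \] and the maximum is attained by $S=i^k$ (the run of $k$ copies of $i$). (ii) If $m>1$ and $p_1=\cdots=p_m$, then $\min\{E(S):S\in[m]^k\}=m^k$, and this minimum is attained by every $S\in[m]^k$ whose only overlap is $S$ itself, for example any word consisting of exactly two maximal runs of letters.
   Context: An overlap of $S$ is a nonempty word that is both a prefix and a suffix of $S$ (including $S$ itself). $[m]^k$ is the set of words of length $k$ on $[m]=\{1,\dots,m\}$. *)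

(* Defs.v *)
From HB Require Import structures.
From mathcomp Require Import all_boot all_order all_algebra.
From mathcomp Require Import all_classical all_reals all_analysis.
Set Implicit Arguments. Unset Strict Implicit. Unset Printing Implicit Defensive.
Import Order.TTheory GRing.Theory Num.Theory.
Local Open Scope ring_scope.

(* Words on [m] = {1,..,m} are represented as sequences over 'I_m. *)

Definition overlap (m : nat) (T S : seq 'I_m) : bool :=
  (0 < size T)%N && prefix T S && suffix T S.

Definition nruns (m : nat) (S : seq 'I_m) : nat :=
  match S with
  | [::] => 0
  | x :: s => (count id (pairmap (fun a b => a != b) x s)).+1
  end.

(* Probability (for i.i.d. rolls with face probabilities p) that the word S
   appears for the first time as a block of consecutive outcomes ending
   exactly at roll n: sum over outcome sequences w of length n that contain
   S as a factor while their first n-1 letters do not. *)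
Definition first_hit_prob (R : realType) (m : nat) (p : 'I_m -> R)
    (S : seq 'I_m) (n : nat) : R :=
  \sum_(w : n.-tuple 'I_m | infix S w && ~~ infix S (take n.-1 w))
     \prod_(x <- w) p x.

Definition expected_wait (R : realType) (m : nat) (p : 'I_m -> R)
    (S : seq 'I_m) : \bar R :=
  (\sum_(0 <= n <oo) ((n%:R * first_hit_prob p S n)%:E))%E.

(* Main.v *)
Require Import Defs.
From HB Require Import structures.
From mathcomp Require Import all_boot all_order all_algebra.
From mathcomp Require Import all_classical all_reals all_analysis.
From mathcomp Require Import ring lra zify.
From Stdlib Require Import Lia.
Import Order.TTheory GRing.Theory Num.Theory.
Local Open Scope ring_scope.
Set Implicit Arguments. Unset Strict Implicit. Unset Printing Implicit Defensive.

Section Words.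
Variable (R : realType) (m : nat) (p : 'I_m -> R).

Fixpoint allw n : seq (seq 'I_m) :=
  if n is n'.+1 then [seq x :: w | x <- enum 'I_m, w <- allw n'] else [:: [::]].

Lemma mem_allw n w : (w \in allw n) = (size w == n).
Proof.
elim: n w => [|n IH] w /=.
  by rewrite inE; case: w.
apply/allpairsP/idP => [[[x v] /= [_ + ->]]|].
  by rewrite IH /= eqSS.
case: w => // x v /=; rewrite eqSS => Hv.
by exists (x, v); rewrite /= mem_enum IH.
Qed.

Lemma uniq_allw n : uniq (allw n).
Proof.
elim: n => [|n IH] //=.
apply: allpairs_uniq => //; first exact: enum_uniq.
by move=> [x v] [y u] _ _ /= [-> ->].
Qed.

Lemma tuple_allw n (F : seq 'I_m -> R) :
  \sum_(w : n.-tuple 'I_m) F w = \sum_(w <- allw n) F w.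
Proof.
rewrite -big_enum /= -(big_map (fun t : n.-tuple 'I_m => val t) xpredT).
apply: perm_big; apply: uniq_perm.
- by rewrite map_inj_uniq ?enum_uniq //; exact: val_inj.
- exact: uniq_allw.
move=> w; rewrite mem_allw; apply/mapP/idP => [[t _ ->]|Hw].
  by rewrite size_tuple.
by exists (Tuple Hw); rewrite ?mem_enum.
Qed.

Lemma allw_cons n (F : seq 'I_m -> R) :
  \sum_(w <- allw n.+1) F w = \sum_(x < m) \sum_(w <- allw n) F (x :: w).
Proof.
by rewrite /= big_allpairs_dep /= big_enum.
Qed.

Lemma allw_cat j n (F : seq 'I_m -> R) :
  \sum_(v <- allw (j + n)) F v =
  \sum_(u <- allw j) \sum_(w <- allw n) F (u ++ w).
Proof.
elim: j F => [|j IH] F.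
  by rewrite add0n /= big_seq1.
rewrite addSn !allw_cons; apply: eq_bigr => x _.
by rewrite IH.
Qed.

Lemma allw_rcons n (F : seq 'I_m -> R) :
  \sum_(v <- allw n.+1) F v =
  \sum_(w <- allw n) \sum_(x < m) F (rcons w x).
Proof.
rewrite -addn1 allw_cat; apply: eq_bigr => w _.
rewrite allw_cons; apply: eq_bigr => x _.
by rewrite big_seq1 cats1.
Qed.

Lemma allw_point j (a : seq 'I_m) (G : seq 'I_m -> R) : size a = j ->
  \sum_(u <- allw j) (if u == a then G u else 0) = G a.
Proof.
move=> Ha.
rewrite (bigD1_seq a) ?uniq_allw ?mem_allw ?Ha //= eqxx.
rewrite big1 ?addr0 // => u /negPf ->; done.
Qed.

Lemma eq_allw n (F G : seq 'I_m -> R) :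
  (forall w, size w = n -> F w = G w) ->
  \sum_(w <- allw n) F w = \sum_(w <- allw n) G w.
Proof.
move=> H; apply: eq_big_seq => w; rewrite mem_allw => /eqP; exact: H.
Qed.

Definition P (w : seq 'I_m) : R := \prod_(x <- w) p x.

Lemma P_cat u v : P (u ++ v) = P u * P v.
Proof. by rewrite /P big_cat. Qed.

Lemma P_rcons w x : P (rcons w x) = P w * p x.
Proof. by rewrite -cats1 P_cat /P big_seq1. Qed.

Hypothesis p_gt0 : forall j, 0 < p j.
Hypothesis p_sum : \sum_(j < m) p j = 1.

Lemma P_gt0 w : 0 < P w.
Proof. by apply: prodr_gt0 => x _. Qed.

Lemma sum_P n : \sum_(w <- allw n) P w = 1.
Proof.
elim: n => [|n IH]; first by rewrite /= big_seq1 /P big_nil.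
rewrite allw_rcons -[RHS]IH; apply: eq_bigr => w _.
by under eq_bigr do rewrite P_rcons; rewrite -mulr_sumr p_sum mulr1.
Qed.

End Words.


Section Hit.
Variable (R : realType) (m : nat) (p : 'I_m -> R).
Hypothesis p_gt0 : forall j, 0 < p j.
Hypothesis p_sum : \sum_(j < m) p j = 1.
Variable S : seq 'I_m.
Hypothesis S_ne : (0 < size S)%N.
Local Notation k := (size S).
Local Notation P := (P p).
Local Notation allw := (allw m).

Definition q n := \sum_(w <- allw n) (if infix S w then 0 else P w).
Definition fh (v : seq 'I_m) := infix S v && ~~ infix S (take (size v).-1 v).
Definition f n := \sum_(w <- allw n) (if fh w then P w else 0).

Lemma f_fhp n : first_hit_prob p S n = f n.
Proof.
rewrite /first_hit_prob big_mkcond /= (tuple_allw n (fun w => if infix S w && ~~ infix S (take n.-1 w) then P w else 0)) /f.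
apply: eq_allw => w Hw; rewrite /fh Hw //.
Qed.

Lemma fh_rcons w x : fh (rcons w x) = infix S (rcons w x) && ~~ infix S w.
Proof. by rewrite /fh size_rcons /= -cats1 take_size_cat. Qed.

Lemma f_succ n : f n.+1 = q n - q n.+1.
Proof.
apply/eqP; rewrite eq_sym subr_eq; apply/eqP.
rewrite /f /q !allw_rcons -big_split /=; apply: eq_bigr => w _.
rewrite -big_split /=.
case: ifP => Hw.
  rewrite big1 // => x _; rewrite fh_rcons Hw /= andbF.
  by rewrite (infix_trans Hw (infix_rcons _ _)) addr0.
rewrite -(mulr1 (P w)) -p_sum mulr_sumr; apply: eq_bigr => x _.
rewrite fh_rcons Hw andbT P_rcons; case: ifP => _; by rewrite ?addr0 ?add0r.
Qed.

Lemma f0 : f 0 = 0.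
Proof.
rewrite /f /= big_seq1 /fh infixs0.
by case: S S_ne.
Qed.

Lemma q_ge0 n : 0 <= q n.
Proof.
by apply: sumr_ge0 => w _; case: ifP => // _; exact/ltW/P_gt0.
Qed.

Lemma f_ge0 n : 0 <= f n.
Proof.
by apply: sumr_ge0 => w _; case: ifP => // _; exact/ltW/P_gt0.
Qed.

Lemma q_small n : (n < k)%N -> q n = 1.
Proof.
move=> Hn; rewrite /q -(sum_P p_sum n); apply: eq_allw => w Hw.
case: ifP => // /size_infix; rewrite Hw => H.
by move: (leq_trans Hn H); rewrite ltnn.
Qed.

Lemma q_succ_le n : q n.+1 <= q n.
Proof. by rewrite -subr_ge0 -f_succ f_ge0. Qed.

Lemma q_mono n n' : (n <= n')%N -> q n' <= q n.
Proof.
move/subnK => <-; elim: (n' - n)%N => [|d IH]; first by rewrite add0n.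
by rewrite addSn (le_trans (q_succ_le _) IH).
Qed.

Lemma fh_suffix v : fh v -> suffix S v.
Proof.
case/lastP: v => [|v x]; first by rewrite /fh infixs0; case: S S_ne.
by rewrite fh_rcons infix_rconsl => /andP[/orP[]// ->].
Qed.

Lemma suffix_cat_eq w u : suffix S (w ++ u) -> (size u <= k)%N ->
  u = drop (k - size u) S.
Proof.
case/suffixP => t Ht Hu.
have Hs : (size w + size u = size t + k)%N by rewrite -size_cat Ht size_cat.
have := congr1 (drop (size w)) Ht.
rewrite drop_size_cat // drop_cat.
case: ifP => H; first by exfalso; move: H; lia.
by move/negbT: H => H E; rewrite {1}E; congr drop; lia.
Qed.

Definition ov j := suffix (take j S) S.
Definition c j := if ov j then (P (take j S))^-1 else 0.

Lemma c_ge0 j : 0 <= c j.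
Proof. by rewrite /c; case: ifP => // _; rewrite invr_ge0 ltW // P_gt0. Qed.

Lemma ovE j : (j <= k)%N -> ov j = (drop (k - j) S == take j S).
Proof. by move=> Hj; rewrite /ov suffixE size_takel. Qed.

Lemma b_mono w j : infix S (w ++ take j S) -> infix S (w ++ take j.+1 S).
Proof.
move=> H; apply: (infix_trans H).
by rewrite -addn1 takeD catA prefix_infix.
Qed.

Lemma fh_take w j : (j < k)%N ->
  fh (w ++ take j.+1 S) = infix S (w ++ take j.+1 S) && ~~ infix S (w ++ take j S).
Proof.
move=> Hj; rewrite /fh size_cat size_takel // addnS /= take_cat.
rewrite ltnNge leq_addr /= addKn take_takel //.
Qed.

Lemma telescope_fh w : ~~ infix S w ->
  \sum_(j < k) (if fh (w ++ take j.+1 S) then 1 else 0 : R) = 1.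
Proof.
move=> Hw.
pose b j : R := if infix S (w ++ take j S) then 1 else 0.
have -> : \sum_(j < k) (if fh (w ++ take j.+1 S) then 1 else 0 : R) =
          \sum_(0 <= j < k) (b j.+1 - b j).
  rewrite big_mkord; apply: eq_bigr => [[j Hj]] _ /=.
  rewrite fh_take // /b.
  case E1: (infix S (w ++ take j.+1 S)); case E2: (infix S (w ++ take j S)) => /=.
  - by rewrite subrr.
  - by rewrite subr0.
  - by move: (b_mono E2); rewrite E1.
  - by rewrite subrr.
rewrite telescope_sumr // /b take_size take0 cats0 (negPf Hw).
by rewrite suffix_infix subr0.
Qed.

Lemma f_shift n j : (0 < j)%N -> (j <= k)%N ->
  f (n + j) = \sum_(w <- allw n)
     (if infix S w then 0 else
        if fh (w ++ drop (k - j) S) then P (w ++ drop (k - j) S) else 0).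
Proof.
move=> Hj0 Hjk.
rewrite /f allw_cat; apply: eq_allw => w Hw.
case: ifP => Hinf.
  rewrite big1_seq // => u; rewrite mem_allw => /andP[_ /eqP Hu].
  case: ifP => // /andP[_].
  rewrite size_cat.
  case/lastP: u Hu => [|u x] Hu; first by move: Hj0; rewrite -Hu.
  rewrite size_rcons addnS /= -cats1 catA take_size_cat ?size_cat //.
  by rewrite (infix_trans Hinf (prefix_infix _ _)).
rewrite -(@allw_point _ _ j (drop (k - j) S) (fun u => if fh (w ++ u) then P (w ++ u) else 0)); last first.
  by rewrite size_drop; lia.
apply: eq_allw => u Hu.
case: ifP => H; case: ifP => E //.
by move: E; rewrite (suffix_cat_eq (fh_suffix H)) Hu // eqxx.
Qed.

Lemma GO n : q n = \sum_(j < k) c j.+1 * f (n + j.+1).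
Proof.
have PS : 0 < P S by apply: P_gt0.
apply: (mulIf (lt0r_neq0 PS)).
rewrite [RHS]mulr_suml -/(q n).
have -> : q n * P S = \sum_(w <- allw n) (if infix S w then 0 else P (w ++ S)).
  by rewrite /q mulr_suml; apply: eq_bigr => w _; case: ifP; rewrite ?mul0r // P_cat.
have -> : \sum_(w <- allw n) (if infix S w then 0 else P (w ++ S)) =
  \sum_(w <- allw n) \sum_(j < k)
     (if infix S w then 0 else if fh (w ++ take j.+1 S) then P (w ++ S) else 0).
  apply: eq_bigr => w _; case: ifP => Hw; first by rewrite big1.
  rewrite -[LHS]mul1r -(telescope_fh (negbT Hw)) mulr_suml.
  by apply: eq_bigr => j _; case: ifP; rewrite ?mul1r ?mul0r.
rewrite exchange_big /=; apply: eq_bigr => [[j Hj]] _ /=.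
rewrite f_shift // mulr_sumr mulr_suml; apply: eq_bigr => w _.
case: ifP => Hw; first by rewrite !mulr0 mul0r.
rewrite /c (ovE Hj).
case: eqP => [E|NE].
  rewrite E; case: ifP => _; last by rewrite !mulr0 mul0r.
  rewrite !P_cat.
  by field; exact: lt0r_neq0 (P_gt0 p_gt0 _).
rewrite !mul0r; case: ifP => // H; exfalso; apply: NE.
have := suffix_cat_eq (fh_suffix H); rewrite size_takel // => E.
by rewrite [in RHS]E.
Qed.

End Hit.


Section Anal.
Variable (R : realType) (m : nat) (p : 'I_m -> R).
Hypothesis p_gt0 : forall j, 0 < p j.
Hypothesis p_sum : \sum_(j < m) p j = 1.
Variable S : seq 'I_m.
Hypothesis S_ne : (0 < size S)%N.
Local Notation k := (size S).
Local Notation q := (q p S).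
Local Notation f := (f p S).
Local Notation c := (c p S).

Definition C := \sum_(j < k) c j.+1.
Definition Q N := \sum_(t < N) q t.
Definition sN N := \sum_(n < N) n%:R * f n.

Lemma C_ge0 : 0 <= C.
Proof. by apply: sumr_ge0 => j _; exact: (c_ge0 p_gt0). Qed.

Lemma sum_f_shift j N : \sum_(t < N) f (t + j.+1) = q j - q (N + j).
Proof.
elim: N => [|N IH]; first by rewrite big_ord0 add0n subrr.
rewrite big_ord_recr /= IH addnS f_succ // addSn.
by rewrite addrA subrK.
Qed.

Lemma Q_eq N : Q N = \sum_(j < k) c j.+1 * (1 - q (N + j)).
Proof.
rewrite /Q; under eq_bigr do rewrite (GO p_gt0 S_ne).
rewrite exchange_big /=; apply: eq_bigr => [[j Hj]] _ /=.
by rewrite -mulr_sumr sum_f_shift q_small.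
Qed.

Lemma C_Q N : C - Q N = \sum_(j < k) c j.+1 * q (N + j).
Proof.
rewrite Q_eq /C -sumrB; apply: eq_bigr => j _.
by rewrite mulrBr mulr1 opprB addrC subrK.
Qed.

Lemma C_Q_le N : C - Q N <= C * q N.
Proof.
rewrite C_Q /C mulr_suml; apply: ler_sum => j _.
apply: ler_wpM2l; first exact: (c_ge0 p_gt0).
by apply: q_mono => //; exact: leq_addr.
Qed.

Lemma Q_le_C N : Q N <= C.
Proof.
by rewrite -subr_ge0 C_Q; apply: sumr_ge0 => j _; apply: mulr_ge0; [exact: (c_ge0 p_gt0)|exact: (q_ge0 p_gt0)].
Qed.

Lemma Nq_le N : N%:R * q N <= Q N.
Proof.
have H : \sum_(t < N) q N <= Q N.
  by apply: ler_sum => [[t Ht]] _; apply: q_mono => //; exact: ltnW.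
by rewrite mulr_natl; move: H; rewrite -(big_mkord xpredT (fun _ => q N)) sumr_const_nat subn0.
Qed.

Lemma s_eq N : sN N.+1 = Q N - N%:R * q N.
Proof.
elim: N => [|N IH].
  by rewrite /sN /Q big_ord1 big_ord0 /= !mul0r subr0.
rewrite /sN big_ord_recr /= -/(sN N.+1) IH /Q big_ord_recr /= -/(Q N) f_succ //.
rewrite -natr1; ring.
Qed.

Lemma s_le N : sN N <= C.
Proof.
case: N => [|N]; first by rewrite /sN big_ord0 C_ge0.
rewrite s_eq (le_trans _ (Q_le_C N)) // lerBlDr lerDl.
by apply: mulr_ge0; [exact: ler0n|exact: (q_ge0 p_gt0)].
Qed.

Lemma Q_split M N : (M <= N)%N -> Q M - M%:R * q N <= Q N - N%:R * q N.
Proof.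
move=> MN.
rewrite /Q -!(big_mkord xpredT) (@big_cat_nat _ _ _ M 0 N) // /=.
have H : \sum_(M <= t < N) q N <= \sum_(M <= t < N) q t.
  rewrite big_nat_cond [X in _ <= X]big_nat_cond.
  by apply: ler_sum => t /andP[/andP[_ Ht] _]; apply: q_mono => //; exact: ltnW.
rewrite sumr_const_nat -mulr_natl natrB // in H.
move: H; set a := \sum_(M <= t < N) q t; set b := \sum_(0 <= t < M) q t.
move=> H; lra.
Qed.

Lemma lower M : (1 <= M)%N -> M%:R * (C - sN (M * M).+1) <= C * C + C.
Proof.
move=> M1.
have HM : (M <= M * M)%N by rewrite leq_pmulr.
have h1 := Q_split HM.
have h2 := C_Q_le M.
have h3 := Nq_le M.
have h4 := Nq_le (M * M).
have h5 := Q_le_C M.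
have h6 := Q_le_C (M * M).
have Cg := C_ge0.
have qg := q_ge0 p_gt0 S M.
have qg2 := q_ge0 p_gt0 S (M * M).
rewrite s_eq natrM in h4 h1 *.
set x := M%:R in h1 h3 h4 *.
have x1 : 1 <= x by rewrite /x ler1n.
set QM := Q M in h1 h2 h3 h5 *.
set QN := Q (M * M) in h1 h4 h6 *.
set qM := q M in h2 h3 qg *.
set qN := q (M * M) in h1 h4 qg2 *.
(* x*(C - QN + x*x*qN) <= x*(C - QM + x qN) = x(C-QM) + x*x*qN <= x*C*qM + C <= C*C + C *)
have e1 : x * (C - (QN - x * x * qN)) <= x * (C - QM) + x * x * qN.
  rewrite -mulrA -mulrDr; apply: ler_wpM2l; lra.
have e2 : x * (C - QM) <= C * (x * qM).
  by rewrite mulrCA; apply: ler_wpM2l; lra.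
have e3 : C * (x * qM) <= C * C by apply: ler_wpM2l; lra.
lra.
Qed.

End Anal.


Section E.
Variable (R : realType) (m : nat) (p : 'I_m -> R).
Hypothesis p_gt0 : forall j, 0 < p j.
Hypothesis p_sum : \sum_(j < m) p j = 1.
Variable S : seq 'I_m.
Hypothesis S_ne : (0 < size S)%N.

Lemma partial_eq N :
  (\sum_(0 <= n < N) (n%:R * first_hit_prob p S n)%:E)%E = (sN p S N)%:E.
Proof.
rewrite sumEFin big_mkord /sN; congr (_%:E); apply: eq_bigr => n _.
by rewrite f_fhp.
Qed.

Lemma E_eq : expected_wait p S = (C p S)%:E.
Proof.
have u0 : forall n, (0 <= n)%N -> true -> (0 <= (n%:R * first_hit_prob p S n)%:E)%E.
  move=> n _ _; rewrite lee_fin f_fhp; apply: mulr_ge0; first exact: ler0n.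
  exact: (f_ge0 p_gt0).
apply: le_anti; apply/andP; split.
  rewrite /expected_wait; apply: lime_le; first exact: is_cvg_nneseries.
  apply: nearW => N; rewrite partial_eq lee_fin.
  exact: (s_le p_gt0 p_sum S_ne).
apply/lee_addgt0Pr => e e0.
have Cg := C_ge0 p_gt0 S.
pose M := (Num.truncn ((C p S * C p S + C p S) / e)).+1.
have M1 : (1 <= M)%N by [].
have HM : (C p S * C p S + C p S) / e < M%:R.
  exact: truncnS_gt.
have HL := lower p_gt0 p_sum S_ne M1.
have Hs : C p S <= sN p S (M * M).+1 + e.
  rewrite ltr_pdivrMr // in HM.
  have Mpos : 0 < (M%:R : R) by rewrite ltr0n.
  set x := M%:R in HM HL Mpos.
  set s0 := sN p S (M * M).+1 in HL *.
  set c0 := C p S in HM HL Cg *.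
  have : x * (c0 - s0) <= x * e by rewrite mulrC in HM; lra.
  rewrite ler_pM2l // => H; lra.
apply: (le_trans (_ : _ <= (sN p S (M * M).+1)%:E + e%:E)%E).
  by rewrite -EFinD lee_fin.
rewrite leeD2r // -partial_eq.
exact: nneseries_lim_ge.
Qed.

End E.


Lemma cnt0 (m : nat) (x : 'I_m) s :
  count id (pairmap (fun a b => a != b) x s) = 0%N -> s = nseq (size s) x.
Proof.
elim: s x => [|y s IH] x //=.
case: eqP => [<-|] //= H.
by rewrite -IH.
Qed.

Lemma cnt1 (m : nat) (x : 'I_m) s :
  count id (pairmap (fun a b => a != b) x s) = 1%N ->
  exists r t b, b != x /\ x :: s = nseq r.+1 x ++ nseq t.+1 b.
Proof.
elim: s x => [|y s IH] x //=.
case: eqP => [<-|/eqP Hxy] /= H.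
  have [r [t [b [Hb E]]]] := IH x H.
  by exists r.+1, t, b; split => //; rewrite E.
move: H; rewrite add1n => /eqP; rewrite eqSS => /eqP /cnt0 E.
exists 0%N, (size s), y; split; first by rewrite eq_sym.
by rewrite /= -E.
Qed.

Lemma noov_runs (m : nat) (a b : 'I_m) r t T : a != b ->
  overlap T (nseq r.+1 a ++ nseq t.+1 b) -> T = nseq r.+1 a ++ nseq t.+1 b.
Proof.
set Sx := nseq r.+1 a ++ nseq t.+1 b => ab /andP[/andP[Hl Hp] Hs].
have Hk : size Sx = (r.+1 + t.+1)%N by rewrite size_cat !size_nseq.
have nthS i : nth a Sx i = if (i < r.+1)%N then a else if (i - r.+1 < t.+1)%N then b else a.
  by rewrite nth_cat size_nseq !nth_nseq; case: (i < r.+1)%N.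
have Hle := size_prefix Hp.
move: Hp Hs; rewrite prefixE suffixE => /eqP Hp /eqP Hs.
case: (ltngtP (size T) (size Sx)) => Hlt; last first.
  by rewrite -Hp Hlt take_size.
  by move: Hle; rewrite leqNgt Hlt.
set l := size T in Hl Hle Hp Hs Hlt.
set d := (size Sx - l)%N in Hs.
have key i : (i < l)%N -> nth a Sx i = nth a Sx (d + i).
  move=> Hi.
  by rewrite -(nth_take a Hi) Hp -Hs nth_drop.
case: (ltnP d r.+1) => Hd.
  have := key (r.+1 - d)%N.
  rewrite !nthS.
  have -> : (d + (r.+1 - d))%N = r.+1 by lia.
  rewrite ltnn subnn /=.
  have -> : (r.+1 - d < r.+1)%N by lia.
  move=> H; have : a = b by apply: H; lia.
  by move/eqP; rewrite (negPf ab).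
have := key 0%N.
rewrite !nthS addn0 /=.
have -> : (d < r.+1)%N = false by lia.
have -> : (d - r.+1 < t.+1)%N by lia.
move=> H; have : a = b by apply: H; lia.
by move/eqP; rewrite (negPf ab).
Qed.

Lemma nruns2_noov (m : nat) (S : seq 'I_m) : nruns S = 2%N ->
  forall T, overlap T S -> T = S.
Proof.
case: S => [|x s] //= /eqP; rewrite eqSS => /eqP /cnt1 [r [t [b [Hb ->]]]].
by move=> T; apply: noov_runs; rewrite eq_sym.
Qed.

Lemma prod_const (R : realType) (m : nat) (p : 'I_m -> R) a w :
  (forall x, p x = a) -> P p w = a ^+ size w.
Proof.
move=> H; elim: w => [|x w IH]; first by rewrite /P big_nil.
by rewrite /P big_cons -/(P p w) IH H exprS.
Qed.

Lemma prod_ge (R : realType) (m : nat) (p : 'I_m -> R) a w :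
  0 <= a -> (forall x, a <= p x) -> a ^+ size w <= P p w.
Proof.
move=> a0 H; elim: w => [|x w IH]; first by rewrite /P big_nil.
rewrite /P big_cons -/(P p w) exprS.
apply: ler_pM => //; first exact: exprn_ge0.
Qed.

Lemma geo (R : realType) (x : R) n : 0 < x -> x < 1 ->
  \sum_(1 <= e < n.+1) x ^- e = (1 - x ^+ n) / ((1 - x) * x ^+ n).
Proof.
move=> x0 x1.
have xn0 : forall j, x ^+ j != 0 by move=> j; rewrite expf_neq0 // lt0r_neq0.
have H : \sum_(1 <= e < n.+1) x ^- e * ((1 - x) * x ^+ n) = 1 - x ^+ n.
  elim: n => [|n IH]; first by rewrite big_geq // expr0 subrr.
  rewrite big_nat_recr //=.
  have -> : \sum_(1 <= i < n.+1) x ^- i * ((1 - x) * x ^+ n.+1) =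
            x * (\sum_(1 <= e < n.+1) x ^- e * ((1 - x) * x ^+ n)).
    by rewrite mulr_sumr; apply: eq_bigr => i _; rewrite exprS; ring.
  by rewrite IH mulrCA mulVf // mulr1 exprS; ring.
have c0 : (1 - x) * x ^+ n != 0 by rewrite mulf_neq0 // subr_eq0 eq_sym lt_eqF.
by rewrite -H -mulr_suml mulfK.
Qed.

Unset Implicit Arguments.

Lemma P_nseq (R : realType) (m : nat) (p : 'I_m -> R) n i :
  P p (nseq n i) = p i ^+ n.
Proof. by rewrite /P big_nseq iter_mulr_1. Qed.

Theorem corollary4p5 (R : realType) (m k : nat) (p : 'I_m -> R) :
  (1 <= m)%N -> (1 <= k)%N ->
  (forall j, 0 <= p j) -> \sum_(j < m) p j = 1 ->
  (* (i) *)
  ((forall j, 0 < p j) ->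
   forall i : 'I_m, (forall j, p i <= p j) ->
     (forall S : seq 'I_m, size S = k ->
        (expected_wait p S <= (\sum_(1 <= e < k.+1) p i ^- e)%:E)%E)
     /\ expected_wait p (nseq k i) = (\sum_(1 <= e < k.+1) p i ^- e)%:E
     /\ (p i < 1 -> \sum_(1 <= e < k.+1) p i ^- e
                    = (1 - p i ^+ k) / ((1 - p i) * p i ^+ k)))
  /\
  (* (ii) *)
  ((1 < m)%N -> (forall j j', p j = p j') ->
     (forall S : seq 'I_m, size S = k ->
        ((m ^ k)%:R%:E <= expected_wait p S)%E)
     /\ (exists S : seq 'I_m, size S = k /\ (forall T, overlap T S -> T = S))
     /\ (forall S : seq 'I_m, size S = k ->
           (forall T, overlap T S -> T = S) ->
           expected_wait p S = (m ^ k)%:R%:E)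
     /\ (forall S : seq 'I_m, size S = k -> nruns S = 2%N ->
           forall T, overlap T S -> T = S)).
Proof.
move=> m1 k1 p0 psum; split.
  move=> pg i Hmin.
  have C_bound S (Hk : size S = k) : C p S <= \sum_(1 <= e < k.+1) p i ^- e.
    rewrite big_add1 /= big_mkord /C Hk; apply: ler_sum => j _.
    rewrite /c; case: ifP => _; last by rewrite invr_ge0 exprn_ge0 // ltW.
    have Ht : size (take j.+1 S) = j.+1 by rewrite size_takel // Hk.
    rewrite lef_pV2 ?posrE ?(P_gt0 pg) ?exprn_gt0 //.
    by rewrite -{1}Ht; apply: prod_ge => //; exact: ltW.
  split.
    move=> S Hk; rewrite (E_eq pg psum) ?Hk // lee_fin; exact: C_bound.
  split.
    rewrite (E_eq pg psum) ?size_nseq //; congr (_%:E).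
    rewrite big_add1 /= big_mkord /C size_nseq; apply: eq_bigr => [[j Hj]] _ /=.
    rewrite /c /ov take_nseq //.
    have -> : suffix (nseq j.+1 i) (nseq k i).
      by rewrite -(subnK Hj) nseqD suffix_suffix.
    by rewrite P_nseq.
  by move=> pi1; apply: geo.
move=> m2 peq.
case: k k1 => [//|k] _.
pose j0 : 'I_m := Ordinal m1.
pose j1 : 'I_m := Ordinal m2.
have m0 : (m%:R : R) != 0 by rewrite pnatr_eq0 -lt0n.
have pv : forall j, p j = m%:R^-1.
  move=> j.
  have : \sum_(l < m) p l = m%:R * p j.
    rewrite (eq_bigr (fun _ => p j)); last by move=> l _; exact: peq.
    by rewrite sumr_const card_ord mulr_natl.
  by rewrite psum => H; rewrite -[p j](mulKf m0) -H mulr1.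
have pg : forall j, 0 < p j by move=> j; rewrite pv invr_gt0 ltr0n.
have PS : forall w, P p w = m%:R^-1 ^+ size w by move=> w; apply: prod_const.
have ck : forall S, size S = k.+1 -> c p S k.+1 = (m ^ k.+1)%:R.
  move=> S Hk; rewrite /c /ov -Hk take_size suffix_refl PS exprVn invrK natrX.
  by rewrite Hk.
have Ck : forall S, size S = k.+1 -> C p S = \sum_(j < k) c p S j.+1 + (m ^ k.+1)%:R.
  by move=> S Hk; rewrite /C Hk big_ord_recr /= ck.
split.
  move=> S Hk; rewrite (E_eq pg psum) ?Hk // lee_fin Ck // lerDr.
  by apply: sumr_ge0 => j _; exact: (c_ge0 pg).
split.
  case: k {Ck ck} => [|t].
    exists [:: j0]; split => // T /andP[/andP[HT]].
    by rewrite prefixs1 => /orP[/eqP E|/eqP ->] //; rewrite E in HT.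
  exists (nseq 1 j0 ++ nseq t.+1 j1); split; first by rewrite size_cat !size_nseq.
  move=> T; apply: noov_runs.
  by apply/eqP => /(congr1 val).
split.
  move=> S Hk Hno; rewrite (E_eq pg psum) ?Hk //; congr (_%:E).
  rewrite Ck // big1 ?add0r // => [[j Hj]] _ /=.
  rewrite /c; case: ifP => // Hov; exfalso.
  have Hs : size (take j.+1 S) = j.+1 by rewrite size_takel // Hk; lia.
  have := Hno (take j.+1 S).
  move: Hov; rewrite /overlap /ov Hs prefix_take => -> /(_ isT) E.
  by move: Hs; rewrite E Hk; lia.
by move=> S _ H; exact: nruns2_noov.
Qed.
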